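(* Assume $z_1,z_2\in D$ are in the same chart. If $f$ satisfies the rate conditions of order $0$ and $z_1\in J_{cu}(z_2,L)$, then $\|\pi_{(\lambda,x)}(f(z_1)-f(z_2))\|\ge\xi_{cu,1,P}\|\pi_{(\lambda,x)}(z_1-z_2)\|$.
   Context: $c,u,s$ positive integers, $\Lambda=(\mathbb{R}/\mathbb{Z})^c$, $R_\Lambda=\tfrac12$; points are ''in the same chart'' if their $\lambda$-components have lifts to $\mathbb{R}^c$ at distance $\le R_\Lambda$; differences, norms, cones and derivatives are computed in such lifts. $\overline B_n(R)$ closed ball at $0$; Euclidean norms. $0<R<R_\Lambda/2$, $D=\Lambda\times\overline B_u(R)\times\overline B_s(R)$, $z=(\lambda,x,y)$, projections $\pi_\lambda,\pi_x,\pi_y,\pi_{(\lambda,x)}$; $f:D\to\Lambda\times\mathbb{R}^u\times\mathbb{R}^s$ is $C^1$, $f=(f_\lambda,f_x,f_y)$. $m(A)=\max\{c:\|Av\|\ge c\|v\|\}$, $m(\mathbf A)=\inf_{A\in\mathbf A}m(A)$; $[\partial g/\partial w(U)]$ = set of matrices with $(i,j)$ entry in $[\inf_U\partial g_i/\partial w_j,\sup_U\partial g_i/\partial w_j]$; $P(z)=\{w\in D:\|\pi_\lambda w-\pi_\lambda z\|\le R_\Lambda/2\}$. Fix $L\in(2R/R_\Lambda,1)$. $\mu_{s,1}=\sup_D\{\|\partial_yf_y\|+\frac1L\|\partial_{(\lambda,x)}f_y\|\}$, $\xi_{u,1,P}=\inf_{z\in D}m[\partial_xf_x(P(z))]-\frac1L\sup_D\|\partial_{(\lambda,y)}f_x\|$,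 $\mu_{cs,1}=\sup_D\{\|\partial_{(\lambda,y)}f_{(\lambda,y)}\|+L\|\partial_xf_{(\lambda,y)}\|\}$, $\xi_{cu,1,P}=\inf_{z\in D}m[\partial_{(\lambda,x)}f_{(\lambda,x)}(P(z))]-L\sup_D\|\partial_yf_{(\lambda,x)}\|$. Rate conditions of order $0$: $\mu_{s,1}<1<\xi_{u,1,P}$, $\mu_{cs,1}<\xi_{u,1,P}$, $\mu_{s,1}<\xi_{cu,1,P}$. $J_{cu}(z,M)=\{(\lambda,x,y):\|y-\pi_yz\|<M\|(\lambda,x)-\pi_{(\lambda,x)}z\|\}\cup\{z\}$. *)

(* Defs.v *)
From HB Require Import structures.
From mathcomp Require Import all_boot all_order all_algebra.
From mathcomp Require Import all_classical all_reals all_analysis.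
Import numFieldNormedType.Exports.
Import Order.TTheory GRing.Theory Num.Theory.

Set Implicit Arguments.
Unset Strict Implicit.
Unset Printing Implicit Defensive.

Local Open Scope classical_set_scope.
Local Open Scope ring_scope.

(* A point z = (lambda, x, y) of Lambda x R^u x R^s is represented through a
   lift in R^(c+u+s), as a row vector z : 'rV[R]_(c+u+s).  The map f is represented by a lift
   F : 'rV_(c+u+s) -> 'rV_(c+u+s) (see [lift_periodic]). *)

Section Defs.
Variables (R : realType) (c u s : nat).
Local Notation N := (c + u + s)%N.
Local Notation vec := 'rV[R]_N.
Local Notation mat := ('I_N -> 'I_N -> R).

Definition idxL : pred 'I_N := fun j => (j < c)%N.
Definition idxX : pred 'I_N := fun j => (c <= j < c + u)%N.
Definition idxY : pred 'I_N := fun j => (c + u <= j)%N.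
Definition idxLX : pred 'I_N := fun j => (j < c + u)%N.
Definition idxLY : pred 'I_N := fun j => ~~ idxX j.

Definition RLam : R := 2^-1.

Definition enorm (S : pred 'I_N) (v : vec) : R :=
  Num.sqrt (\sum_(j | S j) v ord0 j ^+ 2).

(* lifted domain D = Lambda x B_u(Rr) x B_s(Rr) *)
Definition Dom (Rr : R) : set vec :=
  [set z | enorm idxX z <= Rr /\ enorm idxY z <= Rr].

(* the map f : D -> Lambda x R^u x R^s, given by its lift F: translating
   lambda by an integer vector changes F only by an integer vector in the
   lambda-component (so F descends to a map on D). *)
Definition lift_periodic (Rr : R) (F : vec -> vec) : Prop :=
  forall z, Dom Rr z ->
  forall k : 'I_N -> int, (forall j, ~~ idxL j -> k j = 0) ->
    let w := z + \row_j (k j)%:~R in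
    forall j, (idxL j -> exists m : int, F w ord0 j - F z ord0 j = m%:~R) /\
              (~~ idxL j -> F w ord0 j = F z ord0 j).

Definition pd (F : vec -> vec) (i j : 'I_N) (z : vec) : R :=
  'D_(delta_mx 0 j) (fun w => F w ord0 i) z.

Definition C1_on (U : set vec) (F : vec -> vec) : Prop :=
  forall i j : 'I_N,
    (forall z, U z -> derivable (fun w => F w ord0 i) z (delta_mx 0 j)) /\
    (forall z, U z -> {for z, continuous (pd F i j)}).

Definition jac (F : vec -> vec) (z : vec) : mat := fun i j => pd F i j z.

Definition bmv (J : pred 'I_N) (A : mat) (v : vec) : vec :=
  \row_i \sum_(j | J j) A i j * v ord0 j.

Definition opn (I J : pred 'I_N) (A : mat) : R :=
  sup [set enorm I (bmv J A v) | v in [set v : vec | enorm J v <= 1]].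

Definition mlow (I J : pred 'I_N) (A : mat) : R :=
  sup [set k : R | forall v : vec, enorm I (bmv J A v) >= k * enorm J v].

Definition mset (I J : pred 'I_N) (AA : set mat) : R :=
  inf [set mlow I J A | A in AA].

Definition imat (I J : pred 'I_N) (F : vec -> vec) (W : set vec) : set mat :=
  [set A | forall i j, I i -> J j ->
     inf (pd F i j @` W) <= A i j <= sup (pd F i j @` W)].

Definition Pset (Rr : R) (z : vec) : set vec :=
  [set w | Dom Rr w /\ enorm idxL (w - z) <= RLam / 2].

Definition mu_s1 (Rr L : R) (F : vec -> vec) : R :=
  sup [set opn idxY idxY (jac F z) + L^-1 * opn idxY idxLX (jac F z)
      | z in Dom Rr].

Definition xi_u1P (Rr L : R) (F : vec -> vec) : R :=
  inf [set mset idxX idxX (imat idxX idxX F (Pset Rr z)) | z in Dom Rr]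
  - L^-1 * sup [set opn idxX idxLY (jac F z) | z in Dom Rr].

Definition mu_cs1 (Rr L : R) (F : vec -> vec) : R :=
  sup [set opn idxLY idxLY (jac F z) + L * opn idxLY idxX (jac F z)
      | z in Dom Rr].

Definition xi_cu1P (Rr L : R) (F : vec -> vec) : R :=
  inf [set mset idxLX idxLX (imat idxLX idxLX F (Pset Rr z)) | z in Dom Rr]
  - L * sup [set opn idxLX idxY (jac F z) | z in Dom Rr].

Definition rate_conditions0 (Rr L : R) (F : vec -> vec) : Prop :=
  [/\ mu_s1 Rr L F < 1, 1 < xi_u1P Rr L F,
      mu_cs1 Rr L F < xi_u1P Rr L F & mu_s1 Rr L F < xi_cu1P Rr L F].

Definition Jcu (z : vec) (M : R) : set vec :=
  [set w | enorm idxY (w - z) < M * enorm idxLX (w - z)] `|` [set z].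

End Defs.

(* Main.v *)
Require Import Defs.
From HB Require Import structures.
From mathcomp Require Import all_boot all_order all_algebra.
From mathcomp Require Import all_classical all_reals all_analysis.
Import numFieldNormedType.Exports.
Import Order.TTheory GRing.Theory Num.Theory.
Local Open Scope classical_set_scope.
Local Open Scope ring_scope.
From mathcomp Require Import ring lra.

Set Implicit Arguments.
Unset Strict Implicit.
Unset Printing Implicit Defensive.


Section Sums.
Variables (R : realType) (n : nat) (S : pred 'I_n).
Implicit Types a b : 'I_n -> R.

Lemma sumsq_ge0 a : 0 <= \sum_(j | S j) a j ^+ 2.
Proof. by apply: sumr_ge0 => j _; rewrite sqr_ge0. Qed.

Lemma sumsq_eq0 a : \sum_(j | S j) a j ^+ 2 = 0 -> forall j, S j -> a j = 0.
Proof.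
move=> H j Sj; apply/eqP; rewrite -sqrf_eq0; apply/eqP.
move/eqP: H; rewrite psumr_eq0; last by move=> i _; rewrite sqr_ge0.
by move/allP => /(_ j (mem_index_enum j)); rewrite Sj /= => /eqP.
Qed.

Lemma CS_sq a b : (\sum_(j | S j) a j * b j) ^+ 2 <=
  (\sum_(j | S j) a j ^+ 2) * (\sum_(j | S j) b j ^+ 2).
Proof.
set A := \sum_(j | S j) a j ^+ 2; set B := \sum_(j | S j) b j ^+ 2.
set C := \sum_(j | S j) a j * b j.
have key t : 0 <= A - 2 * t * C + t ^+ 2 * B.
  have -> : A - 2 * t * C + t ^+ 2 * B = \sum_(j | S j) (a j - t * b j) ^+ 2.
    rewrite /A /B /C mulr_sumr mulr_sumr -sumrN -!big_split /=.
    by apply: eq_bigr => j _; ring.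
  exact: sumsq_ge0.
have B0 : 0 <= B by exact: sumsq_ge0.
have [Bz|Bp] := eqVneq B 0.
  have bz := sumsq_eq0 Bz.
  have -> : C = 0 by rewrite /C big1 // => j Sj; rewrite bz // mulr0.
  by rewrite Bz expr0n /= mulr0.
have Bpos : 0 < B by rewrite lt_def Bp B0.
have := key (C / B).
have -> : A - 2 * (C / B) * C + (C / B) ^+ 2 * B = (A * B - C ^+ 2) / B.
  by field.
by rewrite pmulr_lge0 ?invr_gt0 // subr_ge0 mulrC.
Qed.

Lemma CS a b : \sum_(j | S j) a j * b j <=
  Num.sqrt (\sum_(j | S j) a j ^+ 2) * Num.sqrt (\sum_(j | S j) b j ^+ 2).
Proof.
rewrite -sqrtrM; last exact: sumsq_ge0.
apply: le_trans (ler_norm _) _.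
rewrite -sqrtr_sqr; rewrite ler_wsqrtr //; exact: CS_sq.
Qed.

End Sums.

Section Enorm.
Variables (R : realType) (c u s : nat).
Local Notation N := (c + u + s)%N.
Local Notation vec := 'rV[R]_N.
Implicit Types (S : pred 'I_N) (v w : vec).

Lemma enorm_ge0 S v : 0 <= enorm S v.
Proof. exact: sqrtr_ge0. Qed.

Lemma enorm_ext S v w : (forall j, S j -> v ord0 j = w ord0 j) -> enorm S v = enorm S w.
Proof. by move=> H; rewrite /enorm; congr Num.sqrt; apply: eq_bigr => j Sj; rewrite H. Qed.

Lemma enorm_coord S v j : S j -> `|v ord0 j| <= enorm S v.
Proof.
move=> Sj; rewrite /enorm -sqrtr_sqr ler_wsqrtr //.
rewrite (bigD1 j) //= lerDl; apply: sumr_ge0 => i _; exact: sqr_ge0.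
Qed.

Lemma enorm_eq0 S v : enorm S v = 0 -> forall j, S j -> v ord0 j = 0.
Proof.
move=> H j Sj; apply/normr0_eq0/eqP; rewrite eq_le normr_ge0 andbT.
by rewrite -H enorm_coord.
Qed.

Lemma enorm_le_sum S v : enorm S v <= \sum_(j | S j) `|v ord0 j|.
Proof.
rewrite /enorm -[leRHS]ger0_norm; last by apply: sumr_ge0 => j _; exact: normr_ge0.
rewrite -sqrtr_sqr ler_wsqrtr // [leRHS]expr2 mulr_suml ler_sum // => j Sj.
rewrite -(real_normK (num_real (v ord0 j))) expr2 ler_wpM2l //.
rewrite (bigD1 j) //= lerDl; apply: sumr_ge0 => i _; exact: normr_ge0.
Qed.

Lemma enorm_CS S v w : \sum_(j | S j) v ord0 j * w ord0 j <= enorm S v * enorm S w.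
Proof. exact: (CS S (fun j => v ord0 j) (fun j => w ord0 j)). Qed.

Lemma enormZ S k v : enorm S (k *: v) = `|k| * enorm S v.
Proof.
rewrite /enorm -sqrtr_sqr -sqrtrM ?sqr_ge0 //; congr Num.sqrt.
rewrite mulr_sumr; apply: eq_bigr => j _; by rewrite mxE exprMn.
Qed.

Lemma enormD S v w : enorm S (v + w) <= enorm S v + enorm S w.
Proof.
have h0 := enorm_ge0 S v; have h1 := enorm_ge0 S w.
rewrite -(@ger0_norm _ (enorm S v + enorm S w)); last by rewrite addr_ge0.
rewrite /enorm -sqrtr_sqr ler_wsqrtr //.
have ->: \sum_(j | S j) (v + w) ord0 j ^+ 2 =
  \sum_(j | S j) v ord0 j ^+ 2 + 2 * \sum_(j | S j) v ord0 j * w ord0 j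
  + \sum_(j | S j) w ord0 j ^+ 2.
  rewrite mulr_sumr -!big_split /=; apply: eq_bigr => j _; rewrite mxE; ring.
have := enorm_CS S v w; rewrite /enorm.
set A := \sum_(j | S j) _ ^+ 2; set B := \sum_(j | S j) w ord0 j ^+ 2.
set C := \sum_(j | S j) _ * _ => hC.
have hA : 0 <= A by exact: sumsq_ge0.
have hB : 0 <= B by exact: sumsq_ge0.
rewrite sqrrD !sqr_sqrtr //; lra.
Qed.

Lemma enormN S v : enorm S (- v) = enorm S v.
Proof. by rewrite -scaleN1r enormZ normrN normr1 mul1r. Qed.

Lemma enormB S v w : enorm S v - enorm S w <= enorm S (v - w).
Proof.
have := enormD S (v - w) w; rewrite subrK; lra.
Qed.

Lemma enorm0 S : enorm S (0 : vec) = 0.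
Proof. by rewrite -(scale0r (0 : vec)) enormZ normr0 mul0r. Qed.

End Enorm.

Section Ops.
Variables (R : realType) (c u s : nat).
Local Notation N := (c + u + s)%N.
Local Notation vec := 'rV[R]_N.
Local Notation mat := ('I_N -> 'I_N -> R).
Implicit Types (I J : pred 'I_N) (v w : vec) (A : mat).

Lemma bmvZ J A k v : bmv J A (k *: v) = k *: bmv J A v.
Proof.
apply/rowP => i; rewrite !mxE mulr_sumr; apply: eq_bigr => j _.
by rewrite mxE mulrCA.
Qed.

Lemma bmv_ext J A v w : (forall j, J j -> v ord0 j = w ord0 j) -> bmv J A v = bmv J A w.
Proof. by move=> H; apply/rowP => i; rewrite !mxE; apply: eq_bigr => j Jj; rewrite H. Qed.

Lemma bmv_bound I J A v M : 0 <= M -> (forall i j, I i -> J j -> `|A i j| <= M) ->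
  enorm I (bmv J A v) <= (N * N)%:R * M * enorm J v.
Proof.
move=> M0 HM; apply: le_trans (enorm_le_sum _ _) _.
have hb : forall i, I i -> `|bmv J A v ord0 i| <= N%:R * M * enorm J v.
  move=> i Ii; rewrite mxE; apply: le_trans (ler_norm_sum _ _ _) _.
  apply: le_trans (_ : \sum_(j | J j) M * enorm J v <= _).
    apply: ler_sum => j Jj; rewrite normrM; apply: ler_pM => //.
      exact: HM.
    exact: enorm_coord.
  apply: le_trans (_ : \sum_(j < N) M * enorm J v <= _).
    rewrite [leLHS]big_mkcond /=; apply: ler_sum => j _; case: ifP => // _.
    by rewrite mulr_ge0 // enorm_ge0.
  by rewrite sumr_const card_ord -[leLHS]mulr_natl mulrA lexx.
apply: le_trans (_ : \sum_(i | I i) N%:R * M * enorm J v <= _); first exact: ler_sum.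
apply: le_trans (_ : \sum_(i < N) N%:R * M * enorm J v <= _).
  rewrite [leLHS]big_mkcond /=; apply: ler_sum => j _; case: ifP => // _.
  by rewrite !mulr_ge0 // enorm_ge0.
by rewrite sumr_const card_ord -[leLHS]mulr_natl !mulrA natrM lexx.
Qed.

Lemma mat_bounded A : exists M, 0 <= M /\ forall i j, `|A i j| <= M.
Proof.
exists (\sum_(p : 'I_N * 'I_N) `|A p.1 p.2|); split.
  by apply: sumr_ge0 => p _; exact: normr_ge0.
move=> i j; rewrite (bigD1 (i, j)) //= lerDl; apply: sumr_ge0 => p _; exact: normr_ge0.
Qed.

Lemma opn_has_sup I J A M : 0 <= M -> (forall i j, I i -> J j -> `|A i j| <= M) ->
  has_sup [set enorm I (bmv J A v) | v in [set v : vec | enorm J v <= 1]].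
Proof.
move=> M0 HM; split.
  by exists (enorm I (bmv J A 0)); exists 0 => //=; rewrite enorm0 ler01.
exists ((N * N)%:R * M) => _ [v /= hv <-].
apply: le_trans (bmv_bound v M0 HM) _.
by rewrite ler_piMr // mulr_ge0.
Qed.

Lemma opn_ge0 I J A : 0 <= opn I J A.
Proof.
have [M [M0 HM]] := mat_bounded A.
have hs := opn_has_sup (I:=I) (J:=J) M0 (fun i j _ _ => HM i j).
have h0 : enorm J (0:vec) <= 1 by rewrite enorm0 ler01.
exact: le_trans (enorm_ge0 _ _) (sup_upper_bound hs (ex_intro2 _ _ 0 h0 erefl)).
Qed.

Lemma opn_le_bound I J A M : 0 <= M -> (forall i j, I i -> J j -> `|A i j| <= M) ->
  opn I J A <= (N * N)%:R * M.
Proof.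
move=> M0 HM; apply: ge_sup.
  by exists (enorm I (bmv J A 0)); exists 0 => //=; rewrite enorm0 ler01.
move=> _ [v /= hv <-]; apply: le_trans (bmv_bound v M0 HM) _.
by rewrite ler_piMr // mulr_ge0.
Qed.

Lemma opn_le I J A v : enorm I (bmv J A v) <= opn I J A * enorm J v.
Proof.
have [M [M0 HM]] := mat_bounded A.
have hs := opn_has_sup (I:=I) (J:=J) M0 (fun i j _ _ => HM i j).
have [t0|tp] := eqVneq (enorm J v) 0.
  rewrite t0 mulr0 (_ : bmv J A v = 0) ?enorm0 //.
  by apply/rowP => i; rewrite !mxE big1 // => j Jj; rewrite (enorm_eq0 t0) // mulr0.
have tpos : 0 < enorm J v by rewrite lt_def tp enorm_ge0.
have h1 : enorm J ((enorm J v)^-1 *: v) <= 1.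
  by rewrite enormZ ger0_norm ?invr_ge0 ?enorm_ge0 // mulVf.
have := sup_upper_bound hs (ex_intro2 _ _ ((enorm J v)^-1 *: v) h1 erefl).
rewrite bmvZ enormZ ger0_norm ?invr_ge0 ?enorm_ge0 // -/(opn I J A).
by rewrite ler_pdivrMl // mulrC.
Qed.

Lemma enorm_delta J j0 : J j0 -> enorm J (delta_mx 0 j0 : vec) = 1.
Proof.
move=> Jj; rewrite /enorm (bigD1 j0) //= big1 ?addr0.
  by rewrite mxE !eqxx expr1n sqrtr1.
by move=> j /andP[_ hj]; rewrite mxE (negbTE hj) andbF expr0n.
Qed.

Lemma mlow_prop I J A j0 : J j0 ->
  (0 <= mlow I J A) /\ forall v, mlow I J A * enorm J v <= enorm I (bmv J A v).
Proof.
move=> Jj.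
set E := [set k : R | forall v : vec, enorm I (bmv J A v) >= k * enorm J v].
have E0 : E 0 by move=> v; rewrite mul0r enorm_ge0.
have hub : has_ubound E.
  exists (enorm I (bmv J A (delta_mx 0 j0))) => k Ek.
  by have := Ek (delta_mx 0 j0); rewrite enorm_delta // mulr1.
split; first exact: (ub_le_sup hub).
move=> v; have [t0|tp] := eqVneq (enorm J v) 0.
  by rewrite t0 mulr0 enorm_ge0.
have tpos : 0 < enorm J v by rewrite lt_def tp enorm_ge0.
rewrite -ler_pdivlMr //; apply: ge_sup; first by exists 0.
by move=> k Ek; rewrite ler_pdivlMr //; exact: Ek.
Qed.

Lemma mset_prop I J (AA : set mat) j0 : J j0 ->
  0 <= Defs.mset I J AA /\ forall A, AA A -> Defs.mset I J AA <= mlow I J A.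
Proof.
move=> Jj; have hlb : lbound [set mlow I J A | A in AA] 0.
  by move=> _ [A _ <-]; case: (mlow_prop I A Jj).
split.
  have [[A AAA]|AA0] := pselect (AA !=set0).
    apply: lb_le_inf => //; by exists (mlow I J A); exists A.
  have -> : AA = set0 by apply/seteqP; split => // A ?; apply: AA0; exists A.
  by rewrite /Defs.mset image_set0 inf0.
move=> A AAA; apply: (ge_inf (ex_intro _ 0 hlb)); by exists A.
Qed.

End Ops.

Section Line.
Variables (R : realType) (n : nat).
Local Notation vec := 'rV[R]_n.

Lemma line_derive (G : vec -> R) (p e : vec) (t : R) :
  derivable G (p + t *: e) e ->
  is_derive t 1 (fun t => G (p + t *: e)) ('D_e G (p + t *: e)).
Proof.
move=> H.
have E : (fun h : R => h^-1 *: (((fun t => G (p + t *: e)) \o shift t) (h *: 1)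
            - G (p + t *: e))) =
         (fun h : R => h^-1 *: ((G \o shift (p + t *: e)) (h *: e) - G (p + t *: e))).
  apply/funext => h /=; congr (_ *: (G _ - _)).
  by rewrite /shift /= scaler1 scalerDl addrCA.
split; first by rewrite /derivable E.
by rewrite /derive E.
Qed.

Lemma step_mvt (G : vec -> R) (p e : vec) (a : R) :
  (forall t, `|t| <= `|a| -> derivable G (p + t *: e) e) ->
  exists th, `|th| <= `|a| /\ G (p + a *: e) - G p = 'D_e G (p + th *: e) * a.
Proof.
move=> H.
set phi := fun t => G (p + t *: e).
have hG0 : G p = phi 0 by rewrite /phi scale0r addr0.
have hd : forall t : R, `|t| <= `|a| -> is_derive t (1:R) phi ('D_e G (p + t *: e)).
  by move=> t ht; apply: line_derive; apply: H.
have [a0|a0] := leP 0 a.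
  have cont : {within `[0, a], continuous phi}.
    apply: derivable_within_continuous => t; rewrite in_itv /= => /andP[t0 ta].
    apply: (@ex_derive _ _ _ _ _ _ _ (hd t _)).
    by rewrite !ger0_norm // (le_trans t0 ta).
  have hd' : forall t, t \in `]0, a[ -> is_derive t (1:R) phi ('D_e G (p + t *: e)).
    move=> t; rewrite in_itv /= => /andP[t0 ta]; apply: hd.
    by rewrite !ger0_norm ?ltW // (lt_trans t0 ta).
  have [th thi eq] := MVT_segment a0 hd' cont.
  move: thi; rewrite in_itv /= => /andP[t0 ta].
  exists th; split; first by rewrite !ger0_norm // (le_trans t0 ta).
  by rewrite hG0 -/(phi a) eq subr0.
have cont : {within `[a, 0], continuous phi}.
  apply: derivable_within_continuous => t; rewrite in_itv /= => /andP[t0 ta].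
  apply: (@ex_derive _ _ _ _ _ _ _ (hd t _)).
  by rewrite !ler0_norm ?lerN2 // (le_trans t0 ta) // ltW.
have hd' : forall t, t \in `]a, 0[ -> is_derive t (1:R) phi ('D_e G (p + t *: e)).
  move=> t; rewrite in_itv /= => /andP[t0 ta]; apply: hd.
  by rewrite !ler0_norm ?lerN2 ?ltW // (lt_trans t0 ta).
have [th thi eq] := MVT_segment (ltW a0) hd' cont.
move: thi; rewrite in_itv /= => /andP[t0 ta].
exists th; split; first by rewrite !ler0_norm ?lerN2 // ?ltW // (le_trans t0 ta) // ltW.
rewrite hG0 -/(phi a); apply/eqP; rewrite -subr_eq0; apply/eqP.
move: eq; rewrite sub0r => eq; lra.
Qed.

End Line.

Section Dir.
Variables (R : realType) (n : nat).
Local Notation vec := 'rV[R]_n.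

Lemma ball_coord (x y : vec) r : 0 < r -> (forall j, `|x ord0 j - y ord0 j| < r) -> ball x r y.
Proof.
move=> r0 H; split => // i j; rewrite (ord1 i); exact: H.
Qed.

Definition stp (d : vec) (k : nat) : vec := \row_j (if (j < k)%N then d ord0 j else 0).

Lemma stp0 d : stp d 0 = 0.
Proof. by apply/rowP => j; rewrite !mxE. Qed.

Lemma stpN d : stp d n = d.
Proof. by apply/rowP => j; rewrite !mxE ltn_ord. Qed.

Lemma stpS d (k : 'I_n) : stp d k.+1 = stp d k + d ord0 k *: delta_mx 0 k.
Proof.
apply/rowP => j; rewrite !mxE ltnS leq_eqVlt.
have [->|jk] := eqVneq j k; first by rewrite eqxx ltnn /= add0r mulr1.
have -> : (nat_of_ord j == nat_of_ord k) = false by apply/negbTE; rewrite (inj_eq val_inj).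
by rewrite /= ?andbF ?mulr0 ?addr0.
Qed.


Lemma norm_sub_addr (a b : R) : `|a - (a + b)| = `|b|.
Proof. by rewrite opprD addrA subrr sub0r normrN. Qed.

Lemma dir_deriv_cvg (G : vec -> R) (U : set vec) (x d : vec) :
  open U -> U x ->
  (forall (j : 'I_n) y, U y -> derivable G y (delta_mx 0 j)) ->
  (forall j : 'I_n, {for x, continuous (fun y => 'D_(delta_mx 0 j) G y)}) ->
  (fun h : R => h^-1 *: ((G \o shift x) (h *: d) - G x)) @ (0:R)^' -->
     \sum_(j < n) d ord0 j * 'D_(delta_mx 0 j) G x.
Proof.
move=> Uo Ux Hd Hc.
set D := \sum_(j < n) _.
set Sd := \sum_(j < n) `|d ord0 j|.
have Sd0 : 0 <= Sd by apply: sumr_ge0 => j _; exact: normr_ge0.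
have Sd1 : 0 < Sd + 1 by rewrite ltr_wpDl.
apply/cvgrPdist_lt => e e0.
have eps0 : 0 < e / (Sd + 1) by rewrite divr_gt0.
have HU : \forall y \near x, U y /\ forall j : 'I_n,
    `|'D_(delta_mx 0 j) G x - 'D_(delta_mx 0 j) G y| < e / (Sd + 1).
  near=> y; split.
    near: y; move: Uo; rewrite openE => /(_ x Ux); done.
  near: y; apply: filter_forall => j.
  exact: ((cvgrPdist_lt _ _).1 (Hc j) _ eps0).
move: HU => /nbhs_ballP [r r0 hr].
have eta0 : 0 < r / (Sd + 1) by rewrite divr_gt0.
near=> h.
have hlt : `|h| < r / (Sd + 1) by near: h; exact: dnbhs0_lt.
have hne : h != 0 by near: h; exact: nbhs_dnbhs_neq.
have hSd : `|h| * Sd < r.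
  apply: le_lt_trans (_ : `|h| * (Sd + 1) < r).
    by rewrite ler_wpM2l // lerDl.
  by rewrite -ltr_pdivlMr.
have inball : forall (k : 'I_n) t, `|t| <= `|h * d ord0 k| ->
    ball x r (x + h *: stp d k + t *: delta_mx 0 k).
  move=> k t ht; apply: ball_coord => // j; rewrite !mxE -addrA norm_sub_addr.
  have dj : `|d ord0 j| <= Sd.
    by rewrite /Sd (bigD1 j) //= lerDl; apply: sumr_ge0 => i _; exact: normr_ge0.
  apply: le_lt_trans hSd; apply: le_trans (_ : `|h| * `|d ord0 j| <= _); last first.
    by rewrite ler_wpM2l.
  rewrite eqxx /=.
  case: (ltnP j k) => jk.
    have -> : (j == k) = false.
      by apply/negbTE; apply/negP => /eqP jk'; move: jk; rewrite jk' ltnn.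
    by rewrite mulr0 addr0 normrM.
  rewrite mulr0 add0r.
  have [->|njk] := eqVneq j k; first by rewrite mulr1 -normrM.
  by rewrite mulr0 normr0 mulr_ge0.
have step : forall k : 'I_n, exists th, `|th| <= `|h * d ord0 k| /\
   G (x + h *: stp d k.+1) - G (x + h *: stp d k) =
   'D_(delta_mx 0 k) G (x + h *: stp d k + th *: delta_mx 0 k) * (h * d ord0 k).
  move=> k; rewrite stpS scalerDr scalerA addrA.
  apply: step_mvt => t ht; apply: Hd; exact: (hr _ (inball k t ht)).1.
have [th hth] := choice step.
have tele : G (h *: d + x) - G x =
    \sum_(k < n) (G (x + h *: stp d k.+1) - G (x + h *: stp d k)).
  rewrite -(big_mkord xpredT (fun k => G (x + h *: stp d k.+1) - G (x + h *: stp d k))).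
  by rewrite telescope_sumr // stpN stp0 scaler0 addr0 [h *: d + x]addrC.
rewrite /= tele (eq_bigr _ (fun k _ => (hth k).2)).
have -> : h^-1 *: \sum_(i < n)
         'D_(delta_mx 0 i) G (x + h *: stp d i + th i *: delta_mx 0 i) * (h * d ord0 i)
    = \sum_(i < n) d ord0 i * 'D_(delta_mx 0 i) G (x + h *: stp d i + th i *: delta_mx 0 i).
  rewrite [h^-1 *: _]mulr_sumr; apply: eq_bigr => i _; field; exact: hne.
rewrite /D -sumrB.
apply: (le_lt_trans (ler_norm_sum _ _ _)).
apply: (@le_lt_trans _ _ (\sum_(i < n) `|d ord0 i| * (e / (Sd + 1)))).
  apply: ler_sum => i _; rewrite -mulrBr normrM ler_wpM2l //.
  apply: ltW; apply: (hr _ (inball i (th i) (hth i).1)).2.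
rewrite -mulr_suml -/Sd mulrA ltr_pdivrMr // mulrDr mulr1 [Sd * e]mulrC ltrDl //.
Unshelve. all: by end_near.
Qed.

End Dir.

Section Seg.
Variables (R : realType) (c u s : nat).
Local Notation N := (c + u + s)%N.
Local Notation vec := 'rV[R]_N.

Lemma scE (a b : R) : a *: b = a * b.
Proof. reflexivity. Qed.

Lemma dir_deriv (G : vec -> R) (U : set vec) (x d : vec) :
  open U -> U x ->
  (forall (j : 'I_N) y, U y -> derivable G y (delta_mx 0 j)) ->
  (forall j : 'I_N, {for x, continuous (fun y => 'D_(delta_mx 0 j) G y)}) ->
  derivable G x d /\ 'D_d G x = \sum_(j < N) d ord0 j * 'D_(delta_mx 0 j) G x.
Proof.
move=> Uo Ux Hd Hc; have H := dir_deriv_cvg Uo Ux Hd Hc (d := d).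
split; first by apply/cvg_ex; eexists; exact: H.
by rewrite /derive; apply: cvg_lim.
Qed.

Lemma seg_mvt (F : vec -> vec) (U : set vec) (w : 'I_N -> R) (z d : vec) :
  open U -> C1_on U F -> (forall t, 0 <= t <= 1 -> U (z + t *: d)) ->
  exists2 t, 0 <= t <= 1 &
    \sum_(i < N) w i * (F (z + d) ord0 i - F z ord0 i) =
    \sum_(i < N) w i * \sum_(j < N) d ord0 j * pd F i j (z + t *: d).
Proof.
move=> Uo HC Hseg.
pose phi := \sum_(i < N) (w i \*: (fun t : R => F (z + t *: d) ord0 i)).
have phiE : forall t, phi t = \sum_(i < N) w i * F (z + t *: d) ord0 i.
  by move=> t; rewrite /phi fct_sumE.
pose df := fun t : R => \sum_(i < N) w i *: (\sum_(j < N) d ord0 j * pd F i j (z + t *: d)).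
have hd : forall t : R, 0 <= t <= 1 -> is_derive t (1:R) phi (df t).
  move=> t ht; apply: is_derive_sum => i; apply: is_deriveZ.
  have [hdv hval] := dir_deriv (G := fun y => F y ord0 i) d Uo (Hseg t ht)
     (fun j y Uy => (HC i j).1 y Uy) (fun j => (HC i j).2 _ (Hseg t ht)).
  have := line_derive hdv; rewrite hval; exact.
have cont : {within `[0, 1], continuous phi}.
  apply: derivable_within_continuous => t; rewrite in_itv /= => ht.
  exact: (@ex_derive _ _ _ _ _ _ _ (hd t ht)).
have hd' : forall t : R, t \in `]0, 1[ -> is_derive t (1:R) phi (df t).
  by move=> t; rewrite in_itv /= => /andP[t0 t1]; apply: hd; rewrite !ltW.
have [t tin eq] := MVT_segment ler01 hd' cont.
exists t; first by move: tin; rewrite in_itv.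
move: eq; rewrite !phiE subr0 mulr1 scale1r scale0r addr0 -sumrB => eq.
rewrite (eq_bigr _ (fun i _ => mulrBr _ _ _)) eq.
by apply: eq_bigr => i _.
Qed.

End Seg.

Section Cpt.
Variables (R : realType) (c u s : nat).
Local Notation N := (c + u + s)%N.
Local Notation vec := 'rV[R]_N.

Lemma enorm_continuous (S : pred 'I_N) : continuous (@enorm R c u s S).
Proof.
move=> v.
have -> : @enorm R c u s S = Num.sqrt \o (\sum_(j | S j) (fun w : vec => w ord0 j ^+ 2)).
  by apply/funext => w; rewrite /enorm /= fct_sumE.
apply: continuous_comp; last exact: sqrt_continuous.
apply: (big_ind (fun f : vec -> R => {for v, continuous f})).
- exact: cst_continuous.
- by move=> f g hf hg; apply: continuousD.
- move=> j _.
  have -> : (fun w : vec => w ord0 j ^+ 2) = (fun w : vec => w ord0 j) \* (fun w : vec => w ord0 j).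
    by apply/funext => w; rewrite /= expr2.
  by apply: continuousM; apply: coord_continuous.
Qed.

Lemma Dom_closed (Rr : R) : closed (@Dom R c u s Rr).
Proof.
have -> : @Dom R c u s Rr = (enorm (@idxX c u s) @^-1` [set x | x <= Rr]) `&`
                          (enorm (@idxY c u s) @^-1` [set x | x <= Rr]).
  by apply/seteqP; split => z.
apply: closedI; apply: preimage_closed; (try exact: closed_le);
  by move=> z _; apply: enorm_continuous.
Qed.

Definition boxB (Rr : R) (i : 'I_N) : set R :=
  if (i < c)%N then `[0, 1]%classic else `[- Rr, Rr]%classic.

Definition Kset (Rr : R) : set vec :=
  [set v : vec | forall i, boxB Rr i (v ord0 i)] `&` @Dom R c u s Rr.

Lemma Kset_compact (Rr : R) : compact (Kset Rr).
Proof.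
apply: compact_closedI; last exact: Dom_closed.
apply: rV_compact => i; rewrite /boxB; case: ifP => _; exact: segment_compact.
Qed.

Lemma bound_on_K (Rr : R) (U : set vec) (g : vec -> R) :
  @Dom R c u s Rr `<=` U -> (forall z, U z -> {for z, continuous g}) ->
  exists M, forall z, Kset Rr z -> `|g z| <= M.
Proof.
move=> hDU hc.
have cg : {within Kset Rr, continuous g}.
  apply: continuous_in_subspaceT => z; rewrite inE => Kz.
  by apply: hc; apply: hDU; case: Kz.
have := compact_bounded (continuous_compact cg (Kset_compact (Rr:=Rr))).
case=> M0 [_ HM]; exists (M0 + 1) => z Kz.
have := HM (M0 + 1); rewrite ltrDl ltr01 => /(_ isT); apply; by exists z.
Qed.

End Cpt.

Section Per.
Variables (R : realType) (c u s : nat).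
Local Notation N := (c + u + s)%N.
Local Notation vec := 'rV[R]_N.

Definition kv (k : 'I_N -> int) : vec := \row_j (k j)%:~R.

Lemma enorm_delta_le1 (S : pred 'I_N) j : enorm S (delta_mx 0 j : vec) <= 1.
Proof.
case Sj: (S j); first by rewrite enorm_delta.
rewrite /enorm big1 ?sqrtr0 ?ler01 // => i Si; rewrite mxE.
have -> : (i == j) = false by apply/negbTE; apply: contraFN Sj => /eqP <-.
by rewrite andbF expr0n.
Qed.

Lemma X_notL (j : 'I_N) : @idxX c u s j -> ~~ @idxL c u s j.
Proof. by rewrite /idxX /idxL -leqNgt => /andP[]. Qed.

Lemma Y_notL (j : 'I_N) : @idxY c u s j -> ~~ @idxL c u s j.
Proof. rewrite /idxY /idxL -leqNgt => h; exact: leq_trans (leq_addr _ _) h. Qed.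

Lemma enorm_kv (S : pred 'I_N) (z : vec) k :
  (forall j, ~~ @idxL c u s j -> k j = 0) -> (forall j, S j -> ~~ @idxL c u s j) ->
  enorm S (z + kv k) = enorm S z.
Proof.
move=> hk hS; apply: enorm_ext => j Sj; rewrite !mxE hk ?hS //.
by rewrite addr0.
Qed.

Lemma Dom_kv (Rr : R) (z : vec) k :
  (forall j, ~~ @idxL c u s j -> k j = 0) -> Dom Rr z -> Dom Rr (z + kv k).
Proof.
move=> hk [hx hy]; split; rewrite enorm_kv //; [exact: X_notL | exact: Y_notL].
Qed.

Lemma int_small (m : int) : `|(m%:~R : R)| < 1 -> m = 0.
Proof.
move=> h; have : (`|m| < 1)%R by rewrite -(ltr_int R) intr_norm.
case: m {h} => [[|n]|n] //=.
Qed.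

Lemma scE' (a b : R) : a *: b = a * b.
Proof. reflexivity. Qed.

Lemma pd_per_int (Rr : R) (F : vec -> vec) (U : set vec) k (z : vec) i j :
  @Dom R c u s Rr `<=` U -> C1_on U F -> lift_periodic Rr F ->
  (forall j, ~~ @idxL c u s j -> k j = 0) ->
  enorm (@idxX c u s) z < Rr -> enorm (@idxY c u s) z < Rr ->
  pd F i j (z + kv k) = pd F i j z.
Proof.
move=> hDU HC hper hk hx hy.
have Dz : Dom Rr z by split; apply: ltW.
have Dzk := Dom_kv hk Dz.
pose G := fun w : vec => F w ord0 i.
pose e : vec := delta_mx 0 j.
pose Q1 := fun h : R => h^-1 *: ((G \o shift (z + kv k)) (h *: e) - G (z + kv k)).
pose Q2 := fun h : R => h^-1 *: ((G \o shift z) (h *: e) - G z).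
have c1 : Q1 @ (0:R)^' --> pd F i j (z + kv k) := (HC i j).1 _ (hDU _ Dzk).
have c2 : Q2 @ (0:R)^' --> pd F i j z := (HC i j).1 _ (hDU _ Dz).
suff eqn : \forall h \near (0:R)^', Q2 h = Q1 h.
  apply: cvg_lim => //.
  by apply: cvg_trans c2; apply: near_eq_cvg; exact: eqn.
set D1 := pd F i j (z + kv k); set D2 := pd F i j z.
pose B := `|D1| + `|D2| + 2.
have B0 : 0 < B by rewrite /B ltr_wpDl ?addr_ge0.
pose rho := Num.min (Rr - enorm (@idxX c u s) z) (Rr - enorm (@idxY c u s) z).
have rho0 : 0 < rho by rewrite lt_min !subr_gt0 hx hy.
have mr0 : 0 < Num.min rho (B^-1) by rewrite lt_min rho0 invr_gt0 B0.
near=> h.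
have hne : h != 0 by near: h; exact: nbhs_dnbhs_neq.
have h1 : `|h| < Num.min rho (B^-1) by near: h; exact: dnbhs0_lt.
have q1 : `|D1 - Q1 h| < 1 by near: h; exact: ((cvgrPdist_lt _ _).1 c1 1 ltr01).
have q2 : `|D2 - Q2 h| < 1 by near: h; exact: ((cvgrPdist_lt _ _).1 c2 1 ltr01).
move: h1; rewrite lt_min => /andP[hrho hB].
have Dw : Dom Rr (h *: e + z).
  have hS : forall S : pred 'I_N, enorm S (h *: e + z) <= `|h| + enorm S z.
    move=> S; apply: le_trans (enormD _ _ _) _; rewrite enormZ lerD2r.
    by rewrite ler_piMr // enorm_delta_le1.
  move: hrho; rewrite lt_min => /andP[r1 r2].
  split; apply: le_trans (hS _) _; lra.
have /= per_w := hper _ Dw k hk i.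
have /= per_z := hper _ Dz k hk i.
pose m := (G (h *: e + z + kv k) - G (h *: e + z)) - (G (z + kv k) - G z).
have mQ : m = h * (Q1 h - Q2 h).
  rewrite /m /Q1 /Q2 /= /shift /= !scE' mulrBr !mulrA divff // !mul1r !addrA.
  ring.
have mabs : `|m| < 1.
  have hq : `|Q1 h - Q2 h| < B.
    have e1 : Q1 h - Q2 h = (D1 - D2) - (D1 - Q1 h) + (D2 - Q2 h) by ring.
    rewrite e1; apply: le_lt_trans (ler_normD _ _) _.
    apply: le_lt_trans (lerD (ler_normB _ _) (lexx _)) _.
    apply: le_lt_trans (lerD (lerD (ler_normB _ _) (lexx _)) (lexx _)) _.
    rewrite /B; lra.
  rewrite mQ normrM; apply: lt_le_trans (_ : B^-1 * B <= 1).
    by apply: ltr_pM => //; apply: normr_ge0.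
  by rewrite mulVf ?gt_eqF.
have m0 : m = 0.
  case Li : (@idxL c u s i).
    have [m1 hm1] := per_w.1 Li; have [m2 hm2] := per_z.1 Li.
    have mE : m = (m1 - m2)%:~R by rewrite /m /G hm1 hm2 intrB.
    by move: mabs; rewrite mE => /int_small ->.
  have E1 := per_w.2 (negbT Li); have E2 := per_z.2 (negbT Li).
  by rewrite /m /G E1 E2 !subrr.
move: m0; rewrite mQ => /eqP; rewrite mulf_eq0 (negbTE hne) /= subr_eq0 => /eqP ->.
by [].
Unshelve. all: by end_near.
Qed.

Definition shr (r : R) (z : vec) : vec :=
  \row_j (if @idxL c u s j then z ord0 j else r * z ord0 j).

Lemma enorm_shr (S : pred 'I_N) r z : (forall j, S j -> ~~ @idxL c u s j) ->
  enorm S (shr r z) = `|r| * enorm S z.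
Proof.
move=> hS; rewrite -enormZ; apply: enorm_ext => j Sj.
by rewrite !mxE (negbTE (hS j Sj)).
Qed.

Lemma shr_kv r z k : (forall j, ~~ @idxL c u s j -> k j = 0) ->
  shr r (z + kv k) = shr r z + kv k.
Proof.
move=> hk; apply/rowP => j; rewrite !mxE.
case Lj: (@idxL c u s j) => //; rewrite hk ?Lj //= ?intr0 ?mulr0z ?mulr0 ?addr0 //.
Qed.

Lemma Dom_coord (Rr : R) z j : Dom Rr z -> ~~ @idxL c u s j -> `|z ord0 j| <= Rr.
Proof.
move=> [hx hy] hj.
case Xj : ((j < c + u)%N).
  apply: le_trans hx; apply: enorm_coord; rewrite /idxX Xj andbT.
  by move: hj; rewrite /idxL -leqNgt.
apply: le_trans hy; apply: enorm_coord; rewrite /idxY leqNgt Xj //.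
Qed.

Lemma eq_by_small (a b : R) : (forall e, 0 < e -> `|a - b| < e + e) -> a = b.
Proof.
move=> H; apply/eqP; rewrite -subr_eq0; apply/negPn/negP => hne.
have hp : 0 < `|a - b| / 2 by rewrite divr_gt0 // normr_gt0.
have := H _ hp; rewrite -splitr ltxx //.
Qed.

Lemma pd_per (Rr : R) (F : vec -> vec) (U : set vec) k (z : vec) i j :
  0 < Rr -> @Dom R c u s Rr `<=` U -> C1_on U F -> lift_periodic Rr F ->
  (forall j, ~~ @idxL c u s j -> k j = 0) -> Dom Rr z ->
  pd F i j (z + kv k) = pd F i j z.
Proof.
move=> Rr0 hDU HC hper hk Dz.
have Dzk := Dom_kv hk Dz.
apply: eq_by_small => e e0.
have := (cvgrPdist_lt (F := nbhs z) (FF := nbhs_filter z) (pd F i j) (pd F i j z)).1 ((HC i j).2 _ (hDU _ Dz)) e e0.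
move=> /nbhs_ballP [d1 d10 hd1].
have := (cvgrPdist_lt (F := nbhs (z + kv k)) (FF := nbhs_filter (z + kv k)) (pd F i j) (pd F i j (z + kv k))).1 ((HC i j).2 _ (hDU _ Dzk)) e e0.
move=> /nbhs_ballP [d2 d20 hd2].
pose m := Num.min d1 d2.
have m0 : 0 < m by rewrite lt_min d10 d20.
pose eta := Num.min (m / (Rr + 1)) (1/2).
have eta0 : 0 < eta by rewrite lt_min; apply/andP; split; [apply: divr_gt0 => //; lra | lra].
have eta1 : eta <= 1/2 by rewrite /eta ge_min lexx orbT.
have etam : eta * Rr < m.
  apply: le_lt_trans (_ : m / (Rr + 1) * Rr < m); last first.
    rewrite mulrAC ltr_pdivrMr ?ltr_wpDl ?ltW // ltr_pM2l //; lra.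
  by apply: ler_wpM2r; [exact: ltW | rewrite /eta ge_min lexx].
pose r := 1 - eta.
have r0 : 0 <= r by rewrite /r subr_ge0; apply: le_trans eta1 _; lra.
have r1 : r < 1 by rewrite /r; lra.
pose zr := shr r z.
have hxr : forall S : pred 'I_N, (forall j, S j -> ~~ @idxL c u s j) ->
    enorm S z <= Rr -> enorm S zr < Rr.
  move=> S hS hz; rewrite enorm_shr // ger0_norm //.
  apply: le_lt_trans (_ : r * Rr < Rr); first by rewrite ler_wpM2l.
  by rewrite gtr_pMl.
have hzr_int := pd_per_int i j hDU HC hper hk
  (hxr _ (@X_notL) Dz.1) (hxr _ (@Y_notL) Dz.2).
have coord : forall jj, `|z ord0 jj - zr ord0 jj| < m.
  move=> jj; rewrite !mxE; case Lj : (@idxL c u s jj).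
    by rewrite subrr normr0.
  have -> : z ord0 jj - r * z ord0 jj = eta * z ord0 jj by rewrite /r; ring.
  rewrite normrM ger0_norm ?ltW //; apply: le_lt_trans etam.
  by apply: ler_wpM2l; [exact: ltW | apply: Dom_coord Dz _; rewrite Lj].
have b1 : ball z d1 zr.
  apply: ball_coord => // jj; apply: lt_le_trans (coord jj) _; by rewrite /m ge_min lexx.
have b2 : ball (z + kv k) d2 (zr + kv k).
  apply: ball_coord => // jj; rewrite !mxE opprD addrACA subrr addr0.
  apply: lt_le_trans (_ : m <= d2); last by rewrite /m ge_min lexx orbT.
  by have := coord jj; rewrite !mxE.
have h1 := hd1 _ b1; have h2 := hd2 _ b2.
rewrite /= in h1 h2.
rewrite /zr -shr_kv // in h2 hzr_int.
have E : pd F i j (z + kv k) - pd F i j z =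
  (pd F i j (z + kv k) - pd F i j (shr r (z + kv k))) + (pd F i j zr - pd F i j z).
  by rewrite hzr_int /zr; ring.
rewrite E; apply: le_lt_trans (ler_normD _ _) _.
rewrite distrC in h1; exact: ltrD.
Qed.

End Per.

Section Bnd.
Variables (R : realType) (c u s : nat).
Local Notation N := (c + u + s)%N.
Local Notation vec := 'rV[R]_N.

Lemma pd_bounded1 (Rr : R) (F : vec -> vec) (U : set vec) i j :
  0 < Rr -> @Dom R c u s Rr `<=` U -> C1_on U F -> lift_periodic Rr F ->
  exists M, forall z, Dom Rr z -> `|pd F i j z| <= M.
Proof.
move=> Rr0 hDU HC hper.
have [M HM] := bound_on_K (g := pd F i j) hDU (fun z Uz => (HC i j).2 z Uz).
exists M => z Dz.
pose k := fun jj : 'I_N => if @idxL c u s jj then Num.floor (z ord0 jj) else 0.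
pose k' := fun jj : 'I_N => - k jj.
have hk : forall jj, ~~ @idxL c u s jj -> k jj = 0 by move=> jj /negbTE; rewrite /k => ->.
have hk' : forall jj, ~~ @idxL c u s jj -> k' jj = 0 by move=> jj /hk; rewrite /k' => ->.
pose z0 := z + kv R k'.
have Dz0 : Dom Rr z0 := Dom_kv hk' Dz.
have ez : z = z0 + kv R k.
  by apply/rowP => jj; rewrite !mxE /k' intrN -addrA addNr addr0.
rewrite ez (pd_per i j Rr0 hDU HC hper hk Dz0); apply: HM; split => // jj.
rewrite /boxB /z0 !mxE /k' /k; case Lj : (@idxL c u s jj).
  move: (Lj); rewrite /idxL => -> /=; rewrite in_itv /= intrN.
  have h1 := Rfloor_le (z ord0 jj); have h2 := lt_succ_Rfloor (z ord0 jj).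
  rewrite RfloorE in h1 h2; apply/andP; split; lra.
move: (Lj); rewrite /idxL => -> /=; rewrite in_itv /= oppr0 addr0.
have := Dom_coord (j := jj) Dz; rewrite Lj => /(_ isT); rewrite ler_norml => /andP[a b].
by apply/andP.
Qed.

Lemma pd_bounded (Rr : R) (F : vec -> vec) (U : set vec) :
  0 < Rr -> @Dom R c u s Rr `<=` U -> C1_on U F -> lift_periodic Rr F ->
  exists M, 0 <= M /\ forall i j z, Dom Rr z -> `|pd F i j z| <= M.
Proof.
move=> Rr0 hDU HC hper.
have H : forall p : 'I_N * 'I_N, exists M, forall z, Dom Rr z -> `|pd F p.1 p.2 z| <= M.
  by move=> p; exact: (pd_bounded1 p.1 p.2 Rr0 hDU HC hper).
have [Mf HMf] := choice H.
exists (\sum_p `|Mf p|); split; first by apply: sumr_ge0 => p _; exact: normr_ge0.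
move=> i j z Dz; apply: le_trans (HMf (i, j) z Dz) _.
apply: le_trans (ler_norm _) _.
by rewrite (bigD1 (i, j)) //= lerDl; apply: sumr_ge0 => p _; exact: normr_ge0.
Qed.

End Bnd.

Section Geo.
Variables (R : realType) (c u s : nat).
Local Notation N := (c + u + s)%N.
Local Notation vec := 'rV[R]_N.

Lemma conv_enorm (S : pred 'I_N) (Rr t : R) (z z' : vec) :
  0 <= t <= 1 -> enorm S z <= Rr -> enorm S z' <= Rr ->
  enorm S (z + t *: (z' - z)) <= Rr.
Proof.
move=> /andP[t0 t1] h h'.
have -> : z + t *: (z' - z) = (1 - t) *: z + t *: z'.
  by apply/rowP => j; rewrite !mxE; ring.
apply: le_trans (enormD _ _ _) _; rewrite !enormZ !ger0_norm ?subr_ge0 //.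
have e0 := enorm_ge0 S z; have e1 := enorm_ge0 S z'.
have : (1 - t) * enorm S z <= (1 - t) * Rr by apply: ler_wpM2l; rewrite ?subr_ge0.
have : t * enorm S z' <= t * Rr by apply: ler_wpM2l.
lra.
Qed.

Lemma conv_Dom (Rr t : R) (z z' : vec) :
  0 <= t <= 1 -> Dom Rr z -> Dom Rr z' -> Dom Rr (z + t *: (z' - z)).
Proof. by move=> ht [h1 h2] [h1' h2']; split; apply: conv_enorm. Qed.

Lemma X_LX (j : 'I_N) : @idxX c u s j -> @idxLX c u s j.
Proof. by rewrite /idxX /idxLX => /andP[]. Qed.

Lemma L_LX (j : 'I_N) : @idxL c u s j -> @idxLX c u s j.
Proof. by rewrite /idxL /idxLX => h; apply: leq_trans h (leq_addr _ _). Qed.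

Lemma Y_nLX (j : 'I_N) : @idxY c u s j -> @idxLX c u s j = false.
Proof. by rewrite /idxY /idxLX => h; apply/negbTE; rewrite -leqNgt. Qed.

Lemma nLX_Y (j : 'I_N) : @idxLX c u s j = false -> @idxY c u s j.
Proof. by rewrite /idxY /idxLX => /negbT; rewrite -leqNgt. Qed.

Lemma sum_delta (i : 'I_N) (f : 'I_N -> R) : \sum_(i' < N) (i' == i)%:R * f i' = f i.
Proof.
rewrite (bigD1 i) //= eqxx mul1r big1 ?addr0 // => i' /negbTE ->; by rewrite mul0r.
Qed.

End Geo.

Unset Implicit Arguments.
Set Strict Implicit.

Theorem lemma4p7 (R : realType) (c u s : nat)
  (hc : (0 < c)%N) (hu : (0 < u)%N) (hs : (0 < s)%N)
  (Rr : R) (hR0 : 0 < Rr) (hR1 : Rr < RLam R / 2)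
  (L : R) (hL0 : 2 * Rr / RLam R < L) (hL1 : L < 1)
  (F : 'rV[R]_(c + u + s) -> 'rV[R]_(c + u + s))
  (U : set 'rV[R]_(c + u + s)) (hUo : open U) (hDU : @Dom R c u s Rr `<=` U)
  (hC1 : C1_on U F) (hper : lift_periodic Rr F)
  (hrate : rate_conditions0 Rr L F)
  (z1 z2 : 'rV[R]_(c + u + s))
  (hz1 : @Dom R c u s Rr z1) (hz2 : @Dom R c u s Rr z2)
  (hchart : enorm (@idxL c u s) (z1 - z2) <= RLam R)
  (hJ : Jcu z2 L z1) :
  enorm (@idxLX c u s) (F z1 - F z2) >= xi_cu1P Rr L F * enorm (@idxLX c u s) (z1 - z2).
Proof.
case: hJ => [hJ|->]; last by rewrite !subrr !enorm0 mulr0.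
move: hJ => /= hJ.
have [M [M0 HM]] := pd_bounded hR0 hDU hC1 hper.
have hN : (0 < c + u + s)%N by rewrite ltn_addr // ltn_addr.
pose j0 : 'I_(c + u + s) := Ordinal hN.
have hj0 : @idxLX c u s j0 by rewrite /idxLX /= ltn_addr.
pose z3 : 'rV[R]_(c + u + s) := \row_j (if @idxLX c u s j then z1 ord0 j else z2 ord0 j).
pose c0 := z2 + 2^-1 *: (z1 - z2).
have half : 0 <= (2^-1 : R) <= 1 by apply/andP; split; lra.
have Dc0 : Dom Rr c0 := conv_Dom half hz2 hz1.
pose d1 := z3 - z2.
have RL : RLam R = 2^-1 by [].
have seg1 : forall t, 0 <= t <= 1 -> Pset Rr c0 (z2 + t *: d1).
  move=> t ht; split; first split.
  - rewrite (@enorm_ext _ _ _ _ _ _ (z2 + t *: (z1 - z2))); first exact: (conv_Dom ht hz2 hz1).1.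
    by move=> j Xj; rewrite !mxE (X_LX Xj).
  - rewrite (@enorm_ext _ _ _ _ _ _ z2); first exact: hz2.2.
    by move=> j Yj; rewrite !mxE (Y_nLX Yj) subrr mulr0 addr0.
  - rewrite (@enorm_ext _ _ _ _ _ _ ((t - 2^-1) *: (z1 - z2))).
      rewrite enormZ RL.
      have h1 : `|t - 2^-1| <= 2^-1.
        by rewrite ler_norml; move: ht => /andP[t0 t1]; apply/andP; split; lra.
      have h2 := enorm_ge0 (@idxL c u s) (z1 - z2).
      rewrite RL in hchart.
      have : `|t - 2^-1| * enorm (@idxL c u s) (z1 - z2) <= 2^-1 * 2^-1.
        by apply: ler_pM => //; exact: normr_ge0.
      lra.
    by move=> j Lj; rewrite !mxE (L_LX Lj); ring.
have U1 : forall t, 0 <= t <= 1 -> U (z2 + t *: d1).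
  by move=> t ht; apply: hDU; exact: (seg1 t ht).1.
have ez3 : z2 + d1 = z3 by rewrite /d1 addrC subrK.
have step1 : forall i : 'I_(c + u + s), exists t, 0 <= t <= 1 /\
    F z3 ord0 i - F z2 ord0 i = \sum_(j < c + u + s) d1 ord0 j * pd F i j (z2 + t *: d1).
  move=> i; have [t ht e] := seg_mvt (fun i' => (i' == i)%:R) hUo hC1 U1.
  by exists t; split => //; move: e; rewrite !sum_delta ez3.
have [tf htf] := choice step1.
pose A : 'I_(c + u + s) -> 'I_(c + u + s) -> R := fun i j => pd F i j (z2 + tf i *: d1).
have Aim : imat (@idxLX c u s) (@idxLX c u s) F (Pset Rr c0) A.
  move=> i j _ _; have Pi := seg1 _ (htf i).1.
  have hs1 : has_sup (pd F i j @` Pset Rr c0).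
    split; first by exists (A i j); exists (z2 + tf i *: d1).
    exists M => _ [w [Dw _] <-]; apply: le_trans (ler_norm _) _; exact: HM.
  have hi1 : has_lbound (pd F i j @` Pset Rr c0).
    exists (- M) => _ [w [Dw _] <-]; rewrite lerNl; apply: le_trans (ler_norm _) _.
    by rewrite normrN; exact: HM.
  apply/andP; split.
    exact: (ge_inf hi1 (ex_intro2 _ _ (z2 + tf i *: d1) Pi erefl)).
  exact: (sup_upper_bound hs1 (ex_intro2 _ _ (z2 + tf i *: d1) Pi erefl)).
have leg1 : Defs.mset (@idxLX c u s) (@idxLX c u s) (imat (@idxLX c u s) (@idxLX c u s) F (Pset Rr c0))
    * enorm (@idxLX c u s) (z1 - z2) <= enorm (@idxLX c u s) (F z3 - F z2).
  have [ms0 hm] := mset_prop (@idxLX c u s) (imat (@idxLX c u s) (@idxLX c u s) F (Pset Rr c0)) hj0.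
  have [ml0 hml] := mlow_prop (@idxLX c u s) A hj0.
  have ed1 : enorm (@idxLX c u s) d1 = enorm (@idxLX c u s) (z1 - z2).
    by apply: enorm_ext => j LXj; rewrite !mxE LXj.
  apply: le_trans (_ : mlow (@idxLX c u s) (@idxLX c u s) A * enorm (@idxLX c u s) d1 <= _).
    by rewrite ed1; apply: ler_wpM2r; [exact: enorm_ge0 | exact: hm].
  rewrite (@enorm_ext _ _ _ _ _ (F z3 - F z2) (bmv (@idxLX c u s) A d1)); first exact: hml.
  move=> i LXi; rewrite !mxE (htf i).2 [RHS]big_mkcond /=; apply: eq_bigr => j _.
  case LXj : (@idxLX c u s j); first by rewrite mulrC.
  by rewrite /d1 !mxE LXj subrr mul0r.
pose d2 := z1 - z3.
have seg2 : forall t, 0 <= t <= 1 -> Dom Rr (z3 + t *: d2).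
  move=> t ht; split.
  - rewrite (@enorm_ext _ _ _ _ _ _ z1); first exact: hz1.1.
    by move=> j Xj; rewrite !mxE (X_LX Xj) subrr mulr0 addr0.
  - rewrite (@enorm_ext _ _ _ _ _ _ (z2 + t *: (z1 - z2))); first exact: (conv_Dom ht hz2 hz1).2.
    by move=> j Yj; rewrite !mxE (Y_nLX Yj).
have U2 : forall t, 0 <= t <= 1 -> U (z3 + t *: d2).
  by move=> t ht; apply: hDU; exact: seg2.
have ez1 : z3 + d2 = z1 by rewrite /d2 addrC subrK.
pose Wv := F z1 - F z3.
pose w := fun i => if @idxLX c u s i then Wv ord0 i else 0.
have [t2 ht2 e2] := seg_mvt w hUo hC1 U2.
pose xi2 := z3 + t2 *: d2.
have Dxi2 : Dom Rr xi2 := seg2 t2 ht2.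
pose S := sup [set opn (@idxLX c u s) (@idxY c u s) (jac F z) | z in Dom Rr].
have opnS : opn (@idxLX c u s) (@idxY c u s) (jac F xi2) <= S.
  apply: ub_le_sup; last by exists xi2.
  exists (((c + u + s) * (c + u + s))%:R * M) => _ [z Dz <-].
  by apply: opn_le_bound => // i j _ _; exact: HM.
have S0 : 0 <= S by apply: le_trans (opn_ge0 _ _ _) opnS.
have ed2 : enorm (@idxY c u s) d2 = enorm (@idxY c u s) (z1 - z2).
  by apply: enorm_ext => j Yj; rewrite !mxE (Y_nLX Yj).
have leg2 : enorm (@idxLX c u s) Wv <= S * enorm (@idxY c u s) (z1 - z2).
  have lhs : \sum_(i < c + u + s) w i * (F (z3 + d2) ord0 i - F z3 ord0 i)
      = enorm (@idxLX c u s) Wv ^+ 2.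
    rewrite sqr_sqrtr ?sumsq_ge0 // [RHS]big_mkcond /=; apply: eq_bigr => i _.
    rewrite /w ez1; case: ifP => _; last by rewrite mul0r.
    by rewrite /Wv !mxE expr2.
  have rhs : \sum_(i < c + u + s) w i * \sum_(j < c + u + s) d2 ord0 j * pd F i j (z3 + t2 *: d2)
      = \sum_(i | @idxLX c u s i) Wv ord0 i * bmv (@idxY c u s) (jac F xi2) d2 ord0 i.
    rewrite [RHS]big_mkcond /=; apply: eq_bigr => i _.
    rewrite /w; case: ifP => _; last by rewrite mul0r.
    congr (_ * _); rewrite mxE [RHS]big_mkcond /=; apply: eq_bigr => j _.
    case Yj : (@idxY c u s j); first by rewrite mulrC.
    have LXj : @idxLX c u s j by apply/negP => /negP /negbTE /nLX_Y; rewrite Yj.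
    by rewrite /d2 !mxE LXj subrr mul0r.
  move: e2; rewrite lhs rhs => e2.
  have hcs := enorm_CS (@idxLX c u s) Wv (bmv (@idxY c u s) (jac F xi2) d2).
  have hop := opn_le (@idxLX c u s) (@idxY c u s) (jac F xi2) d2.
  rewrite ed2 in hop.
  have eW := enorm_ge0 (@idxLX c u s) Wv.
  have eY := enorm_ge0 (@idxY c u s) (z1 - z2).
  have eB := enorm_ge0 (@idxLX c u s) (bmv (@idxY c u s) (jac F xi2) d2).
  have hop2 : enorm (@idxLX c u s) (bmv (@idxY c u s) (jac F xi2) d2) <= S * enorm (@idxY c u s) (z1 - z2).
    apply: le_trans hop _; apply: ler_wpM2r => //.
  have key : enorm (@idxLX c u s) Wv ^+ 2 <= enorm (@idxLX c u s) Wv * (S * enorm (@idxY c u s) (z1 - z2)).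
    rewrite e2; apply: le_trans hcs _; exact: ler_wpM2l.
  have [W0|Wp] := eqVneq (enorm (@idxLX c u s) Wv) 0.
    by rewrite W0 mulr_ge0.
  have Wpos : 0 < enorm (@idxLX c u s) Wv by rewrite lt_def Wp eW.
  by move: key; rewrite expr2 ler_pM2l.
rewrite /xi_cu1P -/S.
set I0 := inf _.
have I0le : I0 <= Defs.mset (@idxLX c u s) (@idxLX c u s) (imat (@idxLX c u s) (@idxLX c u s) F (Pset Rr c0)).
  apply: (ge_inf (ex_intro _ 0 _)); last by exists c0.
  move=> _ [z Dz <-]; exact: (mset_prop (@idxLX c u s) _ hj0).1.
have tri : enorm (@idxLX c u s) (F z3 - F z2) <= enorm (@idxLX c u s) (F z1 - F z2) + enorm (@idxLX c u s) Wv.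
  have -> : F z3 - F z2 = (F z1 - F z2) + - Wv by apply/rowP => i; rewrite /Wv !mxE; ring.
  by apply: le_trans (enormD _ _ _) _; rewrite enormN.
have eL := enorm_ge0 (@idxLX c u s) (z1 - z2).
have eY := enorm_ge0 (@idxY c u s) (z1 - z2).
have a1 : I0 * enorm (@idxLX c u s) (z1 - z2) <=
   Defs.mset (@idxLX c u s) (@idxLX c u s) (imat (@idxLX c u s) (@idxLX c u s) F (Pset Rr c0)) * enorm (@idxLX c u s) (z1 - z2).
  exact: ler_wpM2r.
have a2 : S * enorm (@idxY c u s) (z1 - z2) <= S * (L * enorm (@idxLX c u s) (z1 - z2)).
  by apply: ler_wpM2l => //; apply: ltW.
rewrite mulrBl; nra.
Qed.
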